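(* Let $G$ be a group satisfying the property $\mathsf{FM}$ and $\nu$ a conjugation-invariant pseudo-norm on $G$. Then for any $\mathtt{g}\in A_G$ and any real numbers $\lambda_1,\lambda_2$, \[ \|\bar{\mathtt{g}}^{(\lambda_1+\lambda_2)}\cdot\mathtt{g}^{(\lambda_1)}\cdot\mathtt{g}^{(\lambda_2)}\|_\nu=0. \]
   Context: A conjugation-invariant pseudo-norm on a group $G$ is a function $\nu\colon G\to\mathbb{R}_{\ge0}$ with $\nu(1)=0$, $\nu(f)=\nu(f^{-1})$, $\nu(fg)\le\nu(f)+\nu(g)$ and $\nu(gfg^{-1})=\nu(f)$ for all $f,g\in G$. Property $\mathsf{FM}$: for a subgroup $H\le G$, let $\nu_H(f)$ be the minimal $k$ such that $f=g_1h_1g_1^{-1}\cdots g_kh_kg_k^{-1}$ ($g_i\in G,h_i\in H$), $\infty$ if none; for $K\subset G$ let $\mathrm{D}^f_H(K)$ be the set of $h_0\in G$ such that for all $g_1,\dots,g_k\in G$ there is $h\in G$ with every element of $hh_0h^{-1}K(hh_0h^{-1})^{-1}$ commuting with every element of $\bigcup_i g_iHg_i^{-1}$. $(G,H)$ satisfies $\mathsf{FM}$ if $\nu_H<\infty$ on $G$ and $\mathrm{D}^f_H(h_1Hh_1^{-1}\cup\dots\cup h_kHh_k^{-1})\ne\emptyset$ for all $h_1,\dots,h_k\in G$; $G$ satisfies $\mathsf{FM}$ if some $(G,H)$ does. $A_G=\coprod_{k\ge0}(G\times\mathbb{R})^k$, elements written as formal words $g_1^{s_1}\cdots g_k^{s_k}$,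 empty word $1$. For $\mathtt{g}=g_1^{s_1}\cdots g_k^{s_k}$: $\mathtt{g}\cdot\mathtt{h}$ is concatenation, $\bar{\mathtt{g}}=g_k^{-s_k}\cdots g_1^{-s_1}$, $\mathtt{g}^{(\lambda)}=g_1^{\lambda s_1}\cdots g_k^{\lambda s_k}$, and $\|\mathtt{g}\|_\nu=\lim_{n\to\infty}\frac1n\nu(g_1^{[s_1n]}\cdots g_k^{[s_kn]})$ ($[\cdot]$ integer part; the limit exists under $\mathsf{FM}$), $\|1\|_\nu=0$. *)

(* Defs.v *)
From HB Require Import structures.
From mathcomp Require Import all_boot all_order all_algebra.
From mathcomp Require Import all_classical all_reals all_analysis.
Set Implicit Arguments. Unset Strict Implicit. Unset Printing Implicit Defensive.
Import Order.TTheory GRing.Theory Num.Theory.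
Local Open Scope ring_scope.

Section Defs.
Variable G : groupType.

Definition zpowg (g : G) (z : int) : G :=
  match z with
  | Posz n => (g ^+ n)%g
  | Negz n => ((g ^+ n.+1)^-1)%g
  end.

Definition cj (g h : G) : G := (g * h * g^-1)%g.

Definition ci_pseudo_norm (R : realType) (nu : G -> R) : Prop :=
  [/\ nu 1%g = 0,
      forall f, 0 <= nu f,
      forall f, nu (f^-1)%g = nu f,
      forall f g, nu (f * g)%g <= nu f + nu g
    & forall f g, nu (cj g f) = nu f].

Definition is_subgroup (H : G -> Prop) : Prop :=
  [/\ H 1%g, forall x y, H x -> H y -> H (x * y)%g & forall x, H x -> H (x^-1)%g].

Definition gprod (s : seq G) : G := foldr (fun x acc => (x * acc)%g) 1%g s.

(* nu_H(f) < oo : f is a product of conjugates of elements of H *)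
Definition nuH_finite (H : G -> Prop) (f : G) : Prop :=
  exists s : seq (G * G), (forall p, p \in s -> H p.2) /\
    f = gprod [seq cj p.1 p.2 | p <- s].

Definition in_conj_union (H : G -> Prop) (gs : seq G) (x : G) : Prop :=
  exists2 g, g \in gs & exists2 h, H h & x = cj g h.

Definition in_DfH (H : G -> Prop) (K : G -> Prop) (h0 : G) : Prop :=
  forall gs : seq G, exists h : G,
    forall x y, K x -> in_conj_union H gs y ->
      commute (cj (cj h h0) x) y.

Definition FM_pair (H : G -> Prop) : Prop :=
  [/\ is_subgroup H,
      forall f, nuH_finite H f
    & forall hs : seq G, exists h0, in_DfH H (in_conj_union H hs) h0].

Definition FM : Prop := exists H, FM_pair H.

(* A_G : formal words g_1^{s_1} ... g_k^{s_k} *)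
Section Words.
Variable R : realType.
Definition word := seq (G * R).
Definition wcat (a b : word) : word := a ++ b.
Definition wbar (a : word) : word := rev [seq (p.1, - p.2) | p <- a].
Definition wscale (l : R) (a : word) : word := [seq (p.1, l * p.2) | p <- a].

Definition weval (a : word) (n : nat) : G :=
  gprod [seq zpowg p.1 (Num.floor (p.2 * n%:R)) | p <- a].

(* the sequence n |-> nu(g_1^{[s_1 n]} ... g_k^{[s_k n]}) / n,
   whose limit is ||a||_nu *)
Definition wnorm_seq (nu : G -> R) (a : word) (n : nat) : R :=
  nu (weval a n) / n%:R.
End Words.
End Defs.

(* Main.v *)
Require Import Defs.
From HB Require Import structures.
From mathcomp Require Import all_boot all_order all_algebra.
From mathcomp Require Import all_classical all_reals all_analysis.
From mathcomp Require Import zify ring lra.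
Import Order.TTheory GRing.Theory Num.Theory.
Local Open Scope ring_scope.
Local Open Scope classical_set_scope.

Section Grp.
Variable G : groupType.
Local Open Scope group_scope.

Lemma gprod_cat (s1 s2 : seq G) : gprod (s1 ++ s2) = gprod s1 * gprod s2.
Proof. elim: s1 => [|x s IH] /=; first by rewrite mul1g. by rewrite IH mulgA. Qed.

Lemma gprod_rcons (s : seq G) x : gprod (rcons s x) = gprod s * x.
Proof. by rewrite -cats1 gprod_cat /= mulg1. Qed.

Lemma gprod_inv (s : seq G) : (gprod s)^-1 = gprod (rev (map (fun x => x^-1) s)).
Proof.
elim: s => [|x s IH] /=; first by rewrite invg1.
by rewrite rev_cons gprod_rcons invgM IH.
Qed.

Lemma zpowgS (g : G) z : zpowg g (z + 1%R)%R = zpowg g z * g.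
Proof.
case: z => [n|[|m]].
- by rewrite -PoszD addn1 /= expgSr.
- by rewrite /= mulVg.
- have -> : (Negz m.+1 + 1%R)%R = Negz m by rewrite !NegzE; lia.
  by rewrite /= [g ^+ m.+2]expgS invgM -mulgA mulVg mulg1.
Qed.

Lemma zpowgN1 (g : G) z : zpowg g (z - 1%R)%R = zpowg g z * g^-1.
Proof. by rewrite -{2}(GRing.subrK 1%R z) zpowgS mulgK. Qed.

Lemma zpowgD (g : G) a b : zpowg g (a + b)%R = zpowg g a * zpowg g b.
Proof.
case: b => [n|n].
- elim: n => [|n IH]; first by rewrite GRing.addr0 /= mulg1.
  have -> : (a + Posz n.+1 = (a + Posz n) + 1%R)%R by rewrite -GRing.addrA -PoszD addn1.
  by rewrite zpowgS IH -mulgA -(zpowgS g n) -PoszD addn1.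
- elim: n => [|n IH].
    have -> : (a + Negz 0 = a - 1%R)%R by rewrite NegzE.
    by rewrite zpowgN1.
  have -> : (a + Negz n.+1 = (a + Negz n) - 1%R)%R by rewrite !NegzE; lia.
  have -> : (Negz n.+1 = Negz n - 1%R)%R by rewrite !NegzE; lia.
  by rewrite zpowgN1 IH zpowgN1 mulgA.
Qed.
End Grp.

Set Implicit Arguments. Unset Strict Implicit.

Section Norm.
Variables (G : groupType) (R : realType) (nu : G -> R) (hnu : ci_pseudo_norm nu).

Lemma nu1 : nu 1%g = 0. Proof. by case: hnu. Qed.
Lemma nu_ge0 f : 0 <= nu f. Proof. by case: hnu. Qed.
Lemma nuV f : nu (f^-1)%g = nu f. Proof. by case: hnu. Qed.
Lemma nuM f g : nu (f * g)%g <= nu f + nu g. Proof. by case: hnu. Qed.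
Lemma nuJ f g : nu (g * f * g^-1)%g = nu f. Proof. by case: hnu => _ _ _ _; apply. Qed.

Lemma nu_ins A k B : nu (A * k * B)%g <= nu k + nu (A * B)%g.
Proof.
have -> : (A * k * B = (A * k * A^-1) * (A * B))%g.
  by rewrite !mulgA mulgVK.
by apply: le_trans (nuM _ _) _; rewrite nuJ.
Qed.

Variables (inL : G -> Prop) (C : R).
Hypothesis inL1 : inL 1%g.
Hypothesis inLM : forall x y, inL x -> inL y -> inL (x * y)%g.
Hypothesis inLV : forall x, inL x -> inL (x^-1)%g.
Hypothesis comm_bound : forall a b, inL a -> inL b -> nu (a * b * a^-1 * b^-1)%g <= C.

Lemma inL_gprod (s : seq G) : (forall x, x \in s -> inL x) -> inL (gprod s).
Proof.
elim: s => [|x s IH] H //=; apply: inLM; first by apply: H; rewrite mem_head.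
by apply: IH => y hy; apply: H; rewrite inE hy orbT.
Qed.

Lemma tri (T : eqType) (l : seq T) (fu fv fw : T -> G) :
  (forall p, p \in l -> [/\ inL (fu p), inL (fv p) & inL (fw p)]) ->
  nu (gprod (rev (map fu l)) * gprod (map fv l) * gprod (map fw l))%g
    <= \sum_(p <- l) (nu (fu p * fv p * fw p)%g + C).
Proof.
elim: l => [|p l IH] hL /=.
  by rewrite big_nil !mulg1 nu1.
rewrite big_cons rev_cons gprod_rcons.
set X := gprod (rev _); set Y := gprod (map fv l); set Z := gprod (map fw l).
have [hu hv hw] := hL p (mem_head _ _).
have hY : inL Y.
  apply: inL_gprod => x /mapP [q hq ->].
  by have [] := hL q ltac:(by rewrite inE hq orbT).
set u := fu p; set v := fv p; set w := fw p.
have -> : (X * u * (v * Y) * (w * Z) =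
          (X * (u * v * w) * Y) * (Y^-1 * w^-1 * Y^-1^-1 * w^-1^-1) * Z)%g.
  by rewrite !invgK !mulgA !mulgK.
apply: le_trans (nu_ins _ _ _) _.
rewrite (_ : forall a S : R, a + C + S = C + (a + S)); last by move=> a S; rewrite addrAC addrC.
apply: lerD; first by apply: comm_bound; apply: inLV.
have -> : (X * (u * v * w) * Y * Z = X * (u * v * w) * (Y * Z))%g by rewrite !mulgA.
apply: le_trans (nu_ins _ _ _) _; apply: lerD => //.
rewrite mulgA; apply: IH => q hq; exact: hL q ltac:(by rewrite inE hq orbT).
Qed.
End Norm.

Lemma floor3 (R : realType) (x y z : R) : x + y + z = 0 ->
  (-2 <= Num.floor x + Num.floor y + Num.floor z)%R /\
  (Num.floor x + Num.floor y + Num.floor z <= 0)%R.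
Proof.
move=> h.
have fx := floor_le x; have fy := floor_le y; have fz := floor_le z.
have gx := floorD1_gt x; have gy := floorD1_gt y; have gz := floorD1_gt z.
rewrite !intrD in gx gy gz.
set e := (Num.floor x + Num.floor y + Num.floor z)%R.
have h1 : (e%:~R : R) <= 0 by rewrite /e !intrD; lra.
have h2 : (0 : R) < (e + 3)%:~R by rewrite /e !intrD; lra.
rewrite lerz0 in h1; rewrite ltr0z in h2.
split; lia.
Qed.

Section FMpart.
Variable G : groupType.
Variable H : G -> Prop.
Hypothesis Hsub : is_subgroup H.
Local Open Scope group_scope.

Definition inLc (cs : seq G) (x : G) : Prop :=
  exists s : seq (G * G), (forall p, p \in s -> p.1 \in cs /\ H p.2) /\
    x = gprod [seq cj p.1 p.2 | p <- s].

Lemma inLc1 cs : inLc cs 1.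
Proof. by exists [::]. Qed.

Lemma inLcM cs x y : inLc cs x -> inLc cs y -> inLc cs (x * y).
Proof.
move=> [s1 [h1 ->]] [s2 [h2 ->]]; exists (s1 ++ s2); split.
  by move=> p; rewrite mem_cat => /orP [/h1|/h2].
by rewrite map_cat gprod_cat.
Qed.

Lemma cjV (c h : G) : cj c h^-1 = (cj c h)^-1.
Proof. by rewrite /cj !invgM invgK mulgA. Qed.

Lemma inLcV cs x : inLc cs x -> inLc cs x^-1.
Proof.
case: Hsub => _ _ HV.
move=> [s [hs ->]]; exists (rev (map (fun p => (p.1, p.2^-1)) s)); split.
  move=> p; rewrite mem_rev => /mapP [q hq ->] /=.
  by have [] := hs q hq; split => //; apply: HV.
rewrite gprod_inv map_rev -!map_comp; congr (gprod (rev _)).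
by apply: eq_map => p /=; rewrite cjV.
Qed.

Lemma inLc_zpowg cs x z : inLc cs x -> inLc cs (zpowg x z).
Proof.
move=> hx.
have hP n : inLc cs (x ^+ n).
  elim: n => [|n IH]; first exact: inLc1.
  by rewrite expgS; apply: inLcM.
by case: z => n /=; last apply: inLcV.
Qed.

Lemma inLc_mono cs cs' x : {subset cs <= cs'} -> inLc cs x -> inLc cs' x.
Proof.
move=> sub [s [hs ->]]; exists s; split => // p /hs [h1 h2]; split => //.
exact: sub.
Qed.

Variable cs : seq G.
Variable psi : G.
Hypothesis hcomm : forall x y, in_conj_union H cs x -> in_conj_union H cs y ->
  commute (cj psi x) y.

Lemma cjM (c x y : G) : cj c (x * y) = cj c x * cj c y.
Proof. by rewrite /cj !mulgA mulgVK. Qed.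

Lemma cj1 (c : G) : cj c 1 = 1.
Proof. by rewrite /cj mulg1 mulgV. Qed.

Lemma gen_in (p : G * G) : p.1 \in cs /\ H p.2 -> in_conj_union H cs (cj p.1 p.2).
Proof. by move=> [h1 h2]; exists p.1 => //; exists p.2. Qed.

Lemma commL a b : inLc cs a -> inLc cs b -> commute (cj psi a) b.
Proof.
have gen x b' : in_conj_union H cs x -> inLc cs b' -> commute (cj psi x) b'.
  move=> hx [s [hs ->]]; elim: s hs => [|p s IH] hs /=; first exact: commute1.
  apply: commuteM; first by apply: hcomm => //; apply: gen_in; apply: hs; rewrite mem_head.
  by apply: IH => q hq; apply: hs; rewrite inE hq orbT.
move=> [s [hs ->]] hb; elim: s hs => [|p s IH] hs /=.
  by rewrite cj1; apply: commute_sym; apply: commute1.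
rewrite cjM; apply: commute_sym; apply: commuteM; apply: commute_sym.
  by apply: gen => //; apply: gen_in; apply: hs; rewrite mem_head.
by apply: IH => q hq; apply: hs; rewrite inE hq orbT.
Qed.

Variables (R : realType) (nu : G -> R) (hnu : ci_pseudo_norm nu).

Lemma comm_bnd a b : inLc cs a -> inLc cs b ->
  (nu (a * b * a^-1 * b^-1) <= 4%:R * nu psi)%R.
Proof.
move=> ha hb.
set a' := cj psi a.
have ca : commute a' b by apply: commL.
have e1 : a * b * a^-1 * b^-1 = (a * a'^-1) * (b * (a' * a^-1) * b^-1).
  have : a'^-1 * b * a' = b by rewrite -mulgA -ca mulgA mulVg mul1g.
  by move=> e; rewrite -{1}e !mulgA.
have e2 : nu (a * a'^-1) <= nu psi *+ 2.
  have -> : a * a'^-1 = (a * psi * a^-1) * psi^-1.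
    by rewrite /a' /cj !invgM invgK !mulgA.
  apply: le_trans (nuM hnu _ _) _; by rewrite (nuJ hnu) (nuV hnu) mulr2n.
rewrite e1; apply: le_trans (nuM hnu _ _) _.
rewrite (nuJ hnu).
have -> : a' * a^-1 = (a * a'^-1)^-1 by rewrite invgM invgK.
rewrite (nuV hnu).
have -> : ((4%:R : R) * nu psi = nu psi *+ 2 + nu psi *+ 2)%R.
  by rewrite mulr_natl -mulrnDr.
by apply: lerD.
Qed.
End FMpart.

Lemma inv_le (R : realType) (n : nat) : (0 < n)%N -> (n%:R^-1 : R) <= 2 * n.+1%:R^-1.
Proof.
move=> n0.
rewrite -[X in X <= _]mul1r ler_pdivrMr ?ltr0n // mulrAC ler_pdivlMr ?ltr0n //.
by rewrite mul1r -natrM ler_nat; lia.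
Qed.

Lemma zpow_bnd (G : groupType) (R : realType) (nu : G -> R) (hnu : ci_pseudo_norm nu)
  (x : G) (e : int) : (-2 <= e)%R -> (e <= 0)%R -> nu (zpowg x e) <= nu x *+ 2.
Proof.
move=> h1 h2.
have : e = 0 \/ e = Negz 0 \/ e = Negz 1 by rewrite !NegzE; lia.
have h0 := nu_ge0 hnu x.
case => [->|[->|->]] /=.
- by rewrite (nu1 hnu) mulrn_wge0.
- by rewrite (nuV hnu) mulr2n lerDl.
- rewrite (nuV hnu) mulr2n; exact: nuM hnu _ _.
Qed.

Unset Implicit Arguments.
Theorem lemma3p3 (G : groupType) (R : realType) (nu : G -> R)
  (hFM : FM G) (hnu : ci_pseudo_norm nu) (g : word G R) (l1 l2 : R) :
  wnorm_seq nu (wcat (wcat (wscale (l1 + l2) (wbar g)) (wscale l1 g))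
                     (wscale l2 g)) @ \oo --> 0.
Proof.
case: hFM => H [Hsub Hfin HD].
have [cs hcs] : exists cs : seq G, forall p, p \in g -> inLc H cs p.1.
  elim: g => [|p g' [cs IH]]; first by exists [::].
  have [s [hs ep]] := Hfin p.1.
  exists (map fst s ++ cs) => q; rewrite inE => /orP [/eqP -> | hq].
    exists s; split; last exact: ep.
    by move=> r hr; split; [rewrite mem_cat map_f | apply: hs].
  by apply: inLc_mono (IH q hq) => x hx; rewrite mem_cat hx orbT.
have [h0 hh0] := HD cs.
have [h hh] := hh0 cs.
set psi := cj h h0 in hh.
set C := 4 * nu psi.
set D := \sum_(p <- g) (nu p.1 *+ 2 + C).
have bnd n : nu (weval (wcat (wcat (wscale (l1 + l2) (wbar g)) (wscale l1 g))
                     (wscale l2 g)) n) <= D.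
  set fu := fun p : G * R => zpowg p.1 (Num.floor ((l1 + l2) * - p.2 * n%:R)).
  set fv := fun p : G * R => zpowg p.1 (Num.floor (l1 * p.2 * n%:R)).
  set fw := fun p : G * R => zpowg p.1 (Num.floor (l2 * p.2 * n%:R)).
  have -> : weval (wcat (wcat (wscale (l1 + l2) (wbar g)) (wscale l1 g))
                     (wscale l2 g)) n =
     (gprod (rev (map fu g)) * gprod (map fv g) * gprod (map fw g))%g.
    by rewrite /weval /wcat /wscale /wbar !map_cat !gprod_cat !map_rev -!map_comp.
  apply: le_trans.
    apply: (tri hnu (inL := inLc H cs) (C := C) (inLc1 H cs) (@inLcM _ H cs)
             (inLcV Hsub (cs := cs)) (comm_bnd hh hnu)).
    by move=> p hp; rewrite /fu /fv /fw; split; apply: (inLc_zpowg Hsub); apply: hcs.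
  apply: ler_sum => p _; apply: lerD => //.
  rewrite -!zpowgD; have [lo hi] := @floor3 R ((l1 + l2) * - p.2 * n%:R)
     (l1 * p.2 * n%:R) (l2 * p.2 * n%:R) ltac:(ring).
  exact: zpow_bnd.
have D0 : 0 <= D by apply: le_trans (bnd 0%N); apply: nu_ge0.
apply: (squeeze_cvgr (f := fun=> 0) (h := fun n => D *+ 2 * harmonic n)); last first.
- have := @cvg_harmonic R; move/(cvgMl_tmp (a := D *+ 2)).
  by rewrite mulr0.
- apply/cvgrPdist_lt => e e0; near=> n; by rewrite subrr normr0.
- near=> n.
  have n_gt0 : (0 < n)%N by near: n; exists 1%N => // k /= hk.
  rewrite /wnorm_seq divr_ge0 ?nu_ge0 ?ler0n //=.
  apply: (@le_trans _ _ (D / n%:R)).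
    by apply: ler_wpM2r; [rewrite invr_ge0 ler0n | exact: bnd].
  rewrite -(mulr_natr D 2) -mulrA; apply: ler_wpM2l => //.
  exact: inv_le.
Unshelve. all: end_near.
Qed.
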